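(* Let $(\Psi,\vec u,E)$ be a GCD-to-DIV triple in which $\Psi$ has $d$ variables, and let $p\in\mathbb P(\Psi)$. If $\Psi$ has a solution modulo $p$, then it has a solution $\vec b_p\in\mathbb Z^d$ modulo $p$ with $\|\vec b_p\|_\infty\le(d+1)\cdot\|\Psi\|_\infty^3\,p^2$.
   Context: For integers $a\mid b$ means there is a unique $q$ with $b=qa$. A system of divisibility constraints is $\Psi=\bigwedge_{i=1}^m f_i\mid g_i$ with linear integer polynomials $f_i\neq0$, $g_i$. For a prime $p$, $v_p$ is the $p$-adic valuation ($v_p(0)=\infty$); $\vec b$ is a solution of $\Psi$ modulo $p$ if $f_i(\vec b)\ne0$ and $v_p(f_i(\vec b))\le v_p(g_i(\vec b))$ for all $i$. $\mathbb P(\Psi)$ is the set of primes $p$ with $p\le m$ or $p$ dividing some coefficient or constant of some left-hand side $f_i$. $\|\Psi\|_\infty$ is the maximum absolute value of a coefficient or constant of a polynomial in $\Psi$; $\|\vec b\|_\infty$ is the maximum absolute entry. GCD-to-DIV triple: $(\Psi,\vec u,E)$ such that there are $d',m'\in\mathbb N$ and three disjoint families of variables $\vec z,\vec y,\vec w$ with: (1) $\Psi(\vec z,\vec y,\vec w)$ is a system of divisibility constraints in $m'$ variables, $\vec u\in\mathbb Z^{d'}$, $E\in\mathbb Z^{d'\times m'}$, each column of $E$ corresponding to a variable of $\Psi$; (2) each divisibility of $\Psi$ has the form $h(\vec z)\mid f(\vec y)$ or $f(\vec y)\mid g(\vec w)$ with $g$ non-constant, all polynomials have only non-negative coefficients and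 constants, and every left-hand side has a strictly positive constant; (3) each variable $z$ of $\vec z$ appears in a single polynomial of $\Psi$, which has the form $z+c$ with $c$ a positive integer and occurs in exactly two divisibilities (as left-hand side); (4) each variable $w$ of $\vec w$ appears in exactly two polynomials, of the forms $w$ and $w+c$ with $c$ a positive integer, each occurring exactly once in $\Psi$ (as right-hand sides); (5) every column of $E$ corresponding to a variable of $\vec z$ or $\vec w$ is zero. *)

(* Defs.v *)
From mathcomp Require Import all_boot all_order all_algebra.
Set Implicit Arguments. Unset Strict Implicit. Unset Printing Implicit Defensive.
Import Order.TTheory GRing.Theory Num.Theory.
Local Open Scope ring_scope.

(* A linear integer polynomial in d variables x_0..x_{d-1}:
   (coefficient vector, constant term); it denotes  sum_i P.1 i * x_i + P.2. *)
Definition lpoly (d : nat) := ({ffun 'I_d -> int} * int)%type.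

Definition lpoly_eval d (P : lpoly d) (b : 'I_d -> int) : int :=
  \sum_(i < d) P.1 i * b i + P.2.

Definition lpoly_nz d (P : lpoly d) : bool :=
  [exists i, P.1 i != 0] || (P.2 != 0).

(* A system of divisibility constraints  /\_i f_i | g_i : list of pairs (f_i, g_i). *)
Definition divsys (d : nat) := seq (lpoly d * lpoly d).

Definition wf_divsys d (Psi : divsys d) : bool := all (fun c : lpoly d * lpoly d => lpoly_nz c.1) Psi.

Definition lhss d (Psi : divsys d) : seq (lpoly d) := map fst Psi.
Definition rhss d (Psi : divsys d) : seq (lpoly d) := map snd Psi.
Definition polys d (Psi : divsys d) : seq (lpoly d) :=
  flatten [seq [:: c.1; c.2] | c <- Psi].

(* v_p(a) <= v_p(b), with v_p(0) = infinity; only used when a <> 0 *)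
Definition vp_le (p : nat) (a b : int) : bool :=
  (b == 0) || (logn p `|a|%N <= logn p `|b|%N)%N.

Definition sol_mod d (p : nat) (Psi : divsys d) (b : 'I_d -> int) : bool :=
  all (fun c : lpoly d * lpoly d => (lpoly_eval c.1 b != 0) &&
                vp_le p (lpoly_eval c.1 b) (lpoly_eval c.2 b)) Psi.

Definition inPset d (Psi : divsys d) (p : nat) : bool :=
  prime p &&
  ((p <= size Psi)%N ||
   has (fun c : lpoly d * lpoly d => [exists i, (c.1.1 i != 0) && (p%:Z %| c.1.1 i)%Z]
                 || ((c.1.2 != 0) && (p%:Z %| c.1.2)%Z)) Psi).

Definition lpoly_norm d (P : lpoly d) : nat :=
  maxn (\max_(i < d) `|P.1 i|%N) `|P.2|%N.
Definition divsys_norm d (Psi : divsys d) : nat :=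
  \max_(P <- polys Psi) lpoly_norm P.

Definition vec_norm d (b : 'I_d -> int) : nat := \max_(i < d) `|b i|%N.

Definition varc d (j : 'I_d) (c : int) : lpoly d :=
  ([ffun i => if i == j then 1 else 0], c).

Definition only_vars d (S : pred 'I_d) (P : lpoly d) : bool :=
  [forall i, (P.1 i != 0) ==> S i].
Definition nonneg_poly d (P : lpoly d) : bool :=
  [forall i, 0 <= P.1 i] && (0 <= P.2).
Definition nonconst_poly d (P : lpoly d) : bool := [exists i, P.1 i != 0].

Inductive vkind := VZ | VY | VW.
Definition isZ k := if k is VZ then true else false.
Definition isY k := if k is VY then true else false.
Definition isW k := if k is VW then true else false.

(* (Psi, u, E) is a GCD-to-DIV triple; Psi has m' = d variables, u in Z^d',
   E in Z^(d' x d).  The function kind partitions the variables into the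
   three disjoint families z (VZ), y (VY), w (VW). *)
Definition gcd_to_div_triple (d d' : nat) (Psi : divsys d)
    (u : 'cV[int]_d') (E : 'M[int]_(d', d)) : Prop :=
  exists kind : 'I_d -> vkind,
  wf_divsys Psi /\
  all (fun c : lpoly d * lpoly d =>
         (only_vars (fun i => isZ (kind i)) c.1 && only_vars (fun i => isY (kind i)) c.2)
      || [&& only_vars (fun i => isY (kind i)) c.1,
             only_vars (fun i => isW (kind i)) c.2 & nonconst_poly c.2]) Psi /\
  all (@nonneg_poly d) (polys Psi) /\
  all (fun c : lpoly d * lpoly d => 0 < c.1.2) Psi /\
  (forall x : 'I_d, kind x = VZ ->
     exists c : int, 0 < c /\
       count (pred1 (varc x c)) (polys Psi) = 2%N /\
       count (pred1 (varc x c)) (lhss Psi) = 2%N /\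
       (forall P, P \in polys Psi -> P.1 x != 0 -> P = varc x c)) /\
  (forall x : 'I_d, kind x = VW ->
     exists c : int, 0 < c /\
       count (pred1 (varc x 0)) (polys Psi) = 1%N /\
       count (pred1 (varc x 0)) (rhss Psi) = 1%N /\
       count (pred1 (varc x c)) (polys Psi) = 1%N /\
       count (pred1 (varc x c)) (rhss Psi) = 1%N /\
       (forall P, P \in polys Psi -> P.1 x != 0 -> P = varc x 0 \/ P = varc x c)) /\
  (forall (i : 'I_d') (j : 'I_d), kind j <> VY -> E i j = 0).

(* Main.v *)
Require Import Defs.
From mathcomp Require Import all_boot all_order all_algebra zify.
From Stdlib Require Import ClassicalEpsilon.
Import Order.TTheory GRing.Theory Num.Theory.
Local Open Scope ring_scope.
Set Implicit Arguments. Unset Strict Implicit.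

Lemma fun_choice_int (A : Type) (R : A -> int -> Prop) :
  (forall x, exists y, R x y) -> exists f, forall x, R x (f x).
Proof.
move=> h; exists (fun x => epsilon (inhabits 0) (R x)) => x.
by apply: epsilon_spec; apply: h.
Qed.

Section Val.
Variable p : nat.
Hypothesis pp : prime p.

Definition Pd (j : nat) (x : int) : bool := ((p ^ j)%:Z %| x)%Z.
Definition vv (x : int) : nat := logn p `|x|%N.

Lemma Pd0 j : Pd j 0.
Proof. by rewrite /Pd dvdz0. Qed.

Lemma Pd_le j x : x != 0 -> Pd j x = (j <= vv x)%N.
Proof.
move=> hx; rewrite /Pd dvdzE /vv /=.
by rewrite -pfactor_dvdn // absz_gt0.
Qed.

Lemma vp_leE a b : vp_le p a b = Pd (vv a) b.
Proof.
rewrite /vp_le; case: eqP => [->|/eqP hb] /=; first by rewrite Pd0.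
by rewrite Pd_le.
Qed.

Lemma Pd_mono j k x : (j <= k)%N -> Pd k x -> Pd j x.
Proof.
move=> hjk; apply: dvdz_trans; rewrite dvdzE /=; exact: dvdn_exp2l.
Qed.

Lemma Pd_vv x : Pd (vv x) x.
Proof.
rewrite /Pd dvdzE /=; exact: pfactor_dvdnn.
Qed.

Lemma Pd_trans j a b : a != 0 -> Pd j a -> Pd (vv a) b -> Pd j b.
Proof. by move=> ha; rewrite Pd_le // => /Pd_mono; apply. Qed.

Lemma PdD j x y : Pd j x -> Pd j y -> Pd j (x + y).
Proof. by move=> hx hy; rewrite /Pd rpredD. Qed.

Lemma PdN j x : Pd j (- x) = Pd j x.
Proof. by rewrite /Pd rpredN. Qed.

Lemma Pd_cong K j x y : (j <= K)%N -> ((p ^ K)%:Z %| x - y)%Z -> Pd j x = Pd j y.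
Proof.
move=> hj hK.
have hd : Pd j (x - y) by apply: Pd_mono hj hK.
apply/idP/idP => h.
  have -> : y = x + - (x - y) by rewrite opprB addrC addrNK.
  by apply: PdD h _; rewrite PdN.
by have := PdD h hd; rewrite addrC addrNK.
Qed.

Lemma vv_lt K x : x != 0 -> (`|x| < p ^ K)%N -> (vv x < K)%N.
Proof.
move=> hx hlt; rewrite -(ltn_exp2l _ _ (prime_gt1 pp)).
apply: leq_ltn_trans hlt; apply: dvdn_leq; first by rewrite absz_gt0.
exact: pfactor_dvdnn.
Qed.
End Val.

Lemma eval_varc d (j : 'I_d) c b : lpoly_eval (varc j c) b = b j + c.
Proof.
rewrite /lpoly_eval (bigD1 j) //= ffunE eqxx mul1r big1 ?addr0 // => i /negbTE hi.
by rewrite ffunE hi mul0r.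
Qed.

Lemma eval_agree d (f : lpoly d) b1 b2 :
  (forall i, f.1 i != 0 -> b1 i = b2 i) -> lpoly_eval f b1 = lpoly_eval f b2.
Proof.
move=> h; rewrite /lpoly_eval; congr (_ + _); apply: eq_bigr => i _.
by case: (eqVneq (f.1 i) 0) => [->|/h ->]; rewrite ?mul0r.
Qed.

Lemma eval_const d (f : lpoly d) b : (forall i, f.1 i = 0) -> lpoly_eval f b = f.2.
Proof.
by move=> h; rewrite /lpoly_eval big1 ?add0r // => i _; rewrite h mul0r.
Qed.

Lemma eval_cong d (f : lpoly d) b1 b2 (M : int) :
  (forall i, (M %| b1 i - b2 i)%Z) -> (M %| lpoly_eval f b1 - lpoly_eval f b2)%Z.
Proof.
move=> h; rewrite /lpoly_eval opprD addrACA subrr addr0 -sumrB; apply: rpred_sum => i _.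
by rewrite -mulrBr; apply: dvdz_mull.
Qed.

Lemma eval_pos d (f : lpoly d) b : nonneg_poly f -> 0 < f.2 ->
  (forall i, 0 <= b i) -> 0 < lpoly_eval f b.
Proof.
move=> /andP[/forallP hf _] h2 hb; rewrite /lpoly_eval ltr_wpDl //.
by apply: sumr_ge0 => i _; apply: mulr_ge0.
Qed.

Lemma mem_polys1 d (Psi : divsys d) c : c \in Psi -> c.1 \in polys Psi.
Proof.
move=> h; apply/flattenP; exists [:: c.1; c.2]; last by rewrite inE eqxx.
by apply/mapP; exists c.
Qed.

Lemma mem_polys2 d (Psi : divsys d) c : c \in Psi -> c.2 \in polys Psi.
Proof.
move=> h; apply/flattenP; exists [:: c.1; c.2]; last by rewrite !inE eqxx orbT.
by apply/mapP; exists c.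
Qed.

Lemma const_le_norm d (Psi : divsys d) P : P \in polys Psi -> (`|P.2| <= divsys_norm Psi)%N.
Proof.
move=> h; rewrite /divsys_norm; apply: leq_trans (leq_bigmax_seq _ h _) => //.
exact: leq_maxr.
Qed.

Lemma count_mem_pos (T : eqType) (x : T) s n : count (pred1 x) s = n.+1 -> x \in s.
Proof. by move=> h; rewrite -has_pred1 has_count h. Qed.
Lemma final_bound N p d : (0 < N)%N -> (0 < p)%N -> (N * p <= d.+1 * N ^ 3 * p ^ 2)%N.
Proof. move=> h1 h2. rewrite -mulnA; apply: leq_trans (leq_pmull _ _) => //.
apply: leq_mul; [rewrite -{1}(expn1 N) | rewrite -{1}(expn1 p)]; by rewrite leq_pexp2l.
Qed.

Theorem mainTheorem17 (d d' : nat) (Psi : divsys d) (u : 'cV[int]_d')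
    (E : 'M[int]_(d', d)) (p : nat) :
  gcd_to_div_triple Psi u E ->
  inPset Psi p ->
  (exists b : 'I_d -> int, sol_mod p Psi b) ->
  exists bp : 'I_d -> int, sol_mod p Psi bp /\
    (vec_norm bp <= d.+1 * divsys_norm Psi ^ 3 * p ^ 2)%N.
Proof.
case=> kind [wf [H2 [Hnn [Hpos [H3 [H4 H5]]]]]] /andP[pp _] [b hb].
case: (eqVneq Psi [::]) => [->|Hne].
  by exists (fun=> 0); split => //; rewrite /vec_norm big1.
set N := divsys_norm Psi.
have N1 : (0 < N)%N.
  have [cs hin] : exists cs, cs \in Psi.
    by case: (Psi) Hne => [//|cs ?] _; exists cs; rewrite inE eqxx.
  apply: leq_trans (const_le_norm (mem_polys1 hin)).
  by rewrite absz_gt0 gt_eqF // (allP Hpos _ hin).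
have p1 : (1 < p)%N := prime_gt1 pp.
set K := (trunc_log p N).+1.
set M := (p ^ K)%N.
have NM : (N < M)%N := trunc_log_ltn _ p1.
have MpN : (M <= p * N)%N by rewrite /M /K expnS leq_mul2l trunc_logP ?orbT.
have M0 : (0 < M)%N by rewrite expn_gt0 ltnW.
pose R (x : 'I_d) (cx : int) :=
   (kind x = VZ -> 0 < cx /\
       count (pred1 (varc x cx)) (polys Psi) = 2%N /\
       count (pred1 (varc x cx)) (lhss Psi) = 2%N /\
       (forall P, P \in polys Psi -> P.1 x != 0 -> P = varc x cx)) /\
   (kind x = VW -> 0 < cx /\
       count (pred1 (varc x 0)) (polys Psi) = 1%N /\
       count (pred1 (varc x 0)) (rhss Psi) = 1%N /\
       count (pred1 (varc x cx)) (polys Psi) = 1%N /\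
       count (pred1 (varc x cx)) (rhss Psi) = 1%N /\
       (forall P, P \in polys Psi -> P.1 x != 0 -> P = varc x 0 \/ P = varc x cx)).
have [c hc] : exists c : 'I_d -> int, forall x, R x (c x).
  apply: fun_choice_int => x; rewrite /R; move: (H3 x) (H4 x); case: (kind x) => h3 h4.
  - by case: (h3 erefl) => c' hc'; exists c'; split.
  - by exists 0.
  - by case: (h4 erefl) => c' hc'; exists c'; split.
pose yv (x : 'I_d) := (b x %% (M%:Z))%Z.
pose wok (x : 'I_d) := all (fun cs : lpoly d * lpoly d =>
   (cs.2 == varc x (c x)) ==> Pd p (vv p (lpoly_eval cs.1 yv)) (c x)) Psi.
pose bp (x : 'I_d) := match kind x with
   | VZ => 1 - c x | VY => yv x | VW => if wok x then 0 else - c x end.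
have hyv0 x : 0 <= yv x by rewrite modz_ge0 // eqz_nat -lt0n.
have hyvM x : yv x < M%:Z by rewrite ltz_pmod // ltz_nat.
have hyvc x : (M%:Z %| yv x - b x)%Z.
  rewrite /yv {2}(divz_eq (b x) M%:Z) opprD addrCA subrr addr0 rpredN.
  by apply: dvdz_mull; apply: dvdzz.
have hPcong j f : (j <= K)%N -> Pd p j (lpoly_eval f yv) = Pd p j (lpoly_eval f b).
  by move=> hj; apply: (Pd_cong hj); apply: eval_cong.
have hyonly f : only_vars (fun i => isY (kind i)) f -> lpoly_eval f bp = lpoly_eval f yv.
  move=> /forallP hf; apply: eval_agree => i /(implyP (hf i)).
  by rewrite /bp; case: (kind i).
have hcnorm x : kind x = VW -> (`|c x| <= N)%N.
  move=> kx; have [_ [_ [_ [h _]]]] := proj2 (hc x) kx.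
  by have := const_le_norm (count_mem_pos h).
have hcnormZ x : kind x = VZ -> (`|c x| <= N)%N.
  move=> kx; have [_ [h _]] := proj1 (hc x) kx.
  by have := const_le_norm (count_mem_pos h).
exists bp; split.
  apply/allP => [[f g]] Hin /=.
  have /= /andP[hf0 hfg] := allP hb _ Hin.
  rewrite (vp_leE pp) in hfg.
  have fpol := mem_polys1 Hin; have gpol := mem_polys2 Hin.
  have f2pos : 0 < f.2 := allP Hpos _ Hin.
  case/orP: (allP H2 _ Hin) => /= [/andP[fz gy] | /and3P[fy gw gnc]].
    have eg := hyonly _ gy.
    case: (boolP [exists i, f.1 i != 0]) => [/existsP[i hi] | hno].
      have ki : kind i = VZ.
        by move: (implyP (forallP fz i) hi); case: (kind i).
      have [_ [_ [_ hfv]]] := proj1 (hc i) ki.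
      rewrite (hfv f fpol hi) eval_varc /bp ki subrK oner_eq0 /= (vp_leE pp).
      by rewrite /vv /= logn1 /Pd expn0 dvd1z.
    have hc0 j0 : f.1 j0 = 0.
      by apply/eqP; move: hno; rewrite negb_exists => /forallP/(_ j0); rewrite negbK.
    rewrite !(eval_const _ hc0) in hf0 hfg *.
    rewrite hf0 (vp_leE pp) eg hPcong //.
    exact: ltnW (vv_lt pp hf0 (leq_ltn_trans (const_le_norm fpol) NM)).
  have ef := hyonly _ fy.
  have Fpos : 0 < lpoly_eval f yv.
    by apply: eval_pos => //; apply: (allP Hnn).
  rewrite ef gt_eqF //= (vp_leE pp).
  case/existsP: gnc => i hi.
  have ki : kind i = VW by move: (implyP (forallP gw i) hi); case: (kind i).
  have [hcpos [_ [_ [_ [_ hgv]]]]] := proj2 (hc i) ki.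
  have [eg|eg] := hgv g gpol hi; rewrite eg eval_varc in hfg; rewrite eg eval_varc /bp ki;
    case W: (wok i).
  - by rewrite addr0 Pd0.
  - rewrite addr0 PdN.
    move/negbT: W; rewrite -has_predC => /hasP[[f2 g2] Hin2 /= hn].
    move: hn; rewrite negb_imply => /andP[/eqP eg2 hn2].
    have /= /andP[hf20 hfg2] := allP hb _ Hin2.
    rewrite (vp_leE pp) eg2 eval_varc in hfg2.
    have f2y : only_vars (fun i => isY (kind i)) f2.
      case/orP: (allP H2 _ Hin2) => /= [/andP[_ g2y] | /and3P[//]].
      by move: g2y; rewrite eg2 => /forallP/(_ i); rewrite ffunE eqxx ki.
    have F2pos : 0 < lpoly_eval f2 yv.
      by apply: eval_pos => //; [apply: (allP Hnn); apply: mem_polys1 Hin2 | apply: (allP Hpos _ Hin2)].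
    have ct0 : c i != 0 by rewrite gt_eqF.
    set t := vv p (c i).
    have tK : (t < K)%N by exact: (vv_lt pp ct0 (leq_ltn_trans (hcnorm i ki) NM)).
    rewrite (Pd_le pp) // leqNgt; apply/negP => hlt.
    have h2 : (t < vv p (lpoly_eval f2 yv))%N.
      by rewrite ltnNge; apply/negP => hle; apply: (negP hn2); rewrite (Pd_le pp).
    have A1 : Pd p t.+1 (lpoly_eval f b).
      by rewrite -hPcong // (Pd_le pp) // gt_eqF.
    have A2 : Pd p t.+1 (lpoly_eval f2 b).
      by rewrite -hPcong // (Pd_le pp) // gt_eqF.
    rewrite addr0 in hfg.
    have B1 := Pd_trans pp hf0 A1 hfg.
    have B2 := Pd_trans pp hf20 A2 hfg2.
    have : Pd p t.+1 (b i + c i + - b i) by apply: PdD => //; rewrite PdN.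
    by rewrite addrAC subrr add0r (Pd_le pp) // ltnn.
  - have := allP W _ Hin; rewrite eg eqxx /=.
    by rewrite add0r.
  - by rewrite addNr Pd0.
apply: leq_trans (final_bound d N1 (ltnW p1)).
apply/bigmax_leqP => x _; rewrite /bp.
case E': (kind x).
- have [hcp _] := proj1 (hc x) E'; have := hcnormZ x E'.
  move=> h; apply: leq_trans (leq_pmulr _ (ltnW p1)); lia.
- have := hyv0 x; have := hyvM x; rewrite mulnC in MpN; lia.
- have := hcnorm x E'; case: (wok x) => h;
  apply: leq_trans (leq_pmulr _ (ltnW p1)); lia.
Qed.
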